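(* Let $n\geqslant 1$ and $0\leqslant d\leqslant n-1$ be integers. Then, modulo $\Phi_n(q)$, \[ \sum_{k=0}^{n-1}q^k\begin{bmatrix}2k\\ k+d\end{bmatrix}(-q^{k+1};q)_{n-1-k} \equiv\begin{cases} 0&\text{if }n\equiv d\pmod{2},\\ q^{3(n-1)^2/4-3d^2/4-1} &\text{if }n\equiv d+1\pmod{4},\\ -q^{3(n-1)^2/4-3d^2/4-1} &\text{if }n\equiv d-1\pmod{4}, \end{cases} \] and \[ \sum_{k=0}^{n-1}q^k\begin{bmatrix}2k\\ k+d\end{bmatrix}(-q^{k+1};q)_{n-1-k}^2 \equiv \sum_{k=d+1}^{n}q^{\binom{n}{2}+\binom{k}{2}-d^2}\pmod{\Phi_n(q)}. \]
   Context: Here $q$ is an indeterminate. For $n\geq 1$, $(x;q)_n=(1-x)(1-xq)\cdots(1-xq^{n-1})$ and $(x;q)_0=1$. The $q$-binomial coefficient is $\begin{bmatrix}n\\ k\end{bmatrix}=\frac{(q;q)_n}{(q;q)_k(q;q)_{n-k}}$ if $0\leqslant k\leqslant n$ and $0$ otherwise. $\Phi_n(q)=\prod_{1\le k\le n,\ \gcd(n,k)=1}(q-e^{2\pi i k/n})$ is the $n$-th cyclotomic polynomial. Congruences modulo $\Phi_n(q)$ are between rational functions in $q$ (possibly with negative powers of $q$) whose denominators are coprime to $\Phi_n(q)$: $A\equiv B$ means $A-B$ is such a rational function times $\Phi_n(q)$. *)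

(* Defs.v *)
From HB Require Import structures.
From mathcomp Require Import all_boot all_order all_algebra all_field.
Set Implicit Arguments. Unset Strict Implicit. Unset Printing Implicit Defensive.
Import Order.TTheory GRing.Theory Num.Theory.
Local Open Scope ring_scope.

Notation RF := {fraction {poly rat}}.

Definition qq : RF := tofrac ('X : {poly rat}).

Definition qpoch (x : RF) (n : nat) : RF := \prod_(i < n) (1 - x * qq ^+ i).

Definition qbinom (n k : nat) : RF :=
  if (k <= n)%N then qpoch qq n / (qpoch qq k * qpoch qq (n - k)) else 0.

Definition PhiQ (n : nat) : {poly rat} := map_poly (intr : int -> rat) 'Phi_n.

Definition cong_Phi (n : nat) (A B : RF) : Prop :=
  exists (a b : {poly rat}),
    [/\ b != 0, coprimep b (PhiQ n) & A - B = (tofrac a / tofrac b) * tofrac (PhiQ n)].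

(* Main.v *)
Require Import Defs.
From HB Require Import structures.
From mathcomp Require Import all_boot all_order all_algebra all_field.
From mathcomp Require Import ring zify.
Import Order.TTheory GRing.Theory Num.Theory.
Local Open Scope ring_scope.


Lemma nz_tofrac (p : {poly rat}) : p.[0] != 0 -> tofrac p != 0 :> RF.
Proof. by rewrite tofrac_eq0; apply: contra => /eqP ->; rewrite horner0. Qed.

Lemma qqE : qq = tofrac 'X. Proof. by []. Qed.

Lemma qq_neq0 : qq != 0.
Proof. by rewrite qqE tofrac_eq0 polyX_eq0. Qed.

Lemma oneBq_neq0 k : 1 - qq ^+ k.+1 != 0.
Proof.
have -> : 1 - qq ^+ k.+1 = tofrac (1 - 'X ^+ k.+1) by rewrite tofracB tofracXn tofrac1.
apply: nz_tofrac; rewrite hornerD hornerN hornerXn hornerC expr0n /=.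
by [].
Qed.

Lemma oneDq_neq0 k : 1 + qq ^+ k != 0.
Proof.
have -> : 1 + qq ^+ k = tofrac (1 + 'X ^+ k) by rewrite tofracD tofracXn tofrac1.
apply: nz_tofrac; rewrite hornerD hornerXn hornerC expr0n.
case: k => [|k]; last by rewrite addr0 oner_eq0.
by rewrite -[1 + _]/(1 + 1 : rat) -(natrD _ 1 1) pnatr_eq0.
Qed.

Lemma fl_R1 (F : fieldType) (pn pm pk a b : F) : pm != 0 -> pk != 0 -> a != 0 -> b != 0 ->
  pn / (pm * a * pk) * a = pn / (pm * (pk * b)) * b.
Proof. by move=> *; field; do ! (apply/andP; split) => //. Qed.
Lemma fl_R3 (F : fieldType) (pn pm pk a c : F) : pm != 0 -> pk != 0 -> a != 0 ->
  pn * c / (pm * a * pk) * a = pn / (pm * pk) * c.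
Proof. by move=> *; field; do ! (apply/andP; split) => //. Qed.
Lemma fl_pas (F : fieldType) (pn pm pk x y : F) : pm != 0 -> pk != 0 -> 1 - x != 0 -> 1 - y != 0 ->
  pn * (1 - x * y) / (pm * (1 - x) * (pk * (1 - y))) =
  pn / (pm * (pk * (1 - y))) + x * (pn / (pm * (1 - x) * pk)).
Proof. by move=> *; field; do ! (apply/andP; split) => //. Qed.

Definition P (k : nat) : RF := qpoch qq k.
Lemma P0 : P 0 = 1. Proof. by rewrite /P /qpoch big_ord0. Qed.
Lemma PS k : P k.+1 = P k * (1 - qq ^+ k.+1).
Proof. by rewrite /P /qpoch big_ord_recr /= exprS. Qed.
Lemma P_neq0 k : P k != 0.
Proof. elim: k => [|k IH]; first by rewrite P0 oner_eq0.
by rewrite PS; apply: mulf_neq0; [exact: IH | exact: oneBq_neq0]. Qed.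

Lemma qbinomE N M : (M <= N)%N -> qbinom N M = P N / (P M * P (N - M)).
Proof. by rewrite /qbinom => ->. Qed.
Lemma qbinom_gt N M : (N < M)%N -> qbinom N M = 0.
Proof. by move=> H; rewrite /qbinom leqNgt H. Qed.
Arguments qbinom_gt {N M}.
Arguments qbinomE {N M}.
Lemma qbinomNN N : qbinom N N = 1.
Proof. by rewrite (qbinomE (leqnn N)) subnn P0 mulr1 divff ?P_neq0. Qed.
Lemma qbinomN0 N : qbinom N 0 = 1.
Proof. by rewrite (qbinomE (leq0n N)) subn0 P0 mul1r divff ?P_neq0. Qed.

Lemma qbinom_R1 N M : qbinom N M.+1 * (1 - qq ^+ M.+1) = qbinom N M * (1 - qq ^+ (N - M)).
Proof.
case: (ltngtP M N) => H.
- rewrite (qbinomE H) (qbinomE (ltnW H)).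
  have -> : (N - M = (N - M.+1).+1)%N by rewrite subnSK.
  rewrite PS (PS (N - M.+1)).
  have h1 := P_neq0 M; have h2 := P_neq0 (N - M.+1); have h3 := P_neq0 N.
  have h4 := oneBq_neq0 M; have h5 := oneBq_neq0 (N - M.+1).
  exact: (@fl_R1 RF (P N) (P M) (P (N - M.+1)) _ _ h1 h2 h4 h5).
- have H1 : (N < M.+1)%N by apply: ltnW.
  by rewrite (qbinom_gt H1) (qbinom_gt H) !mul0r.
- rewrite H (qbinom_gt (ltnSn N)) subnn expr0 subrr.
  by rewrite mulr0 mul0r.
Qed.

Lemma qbinom_R3 N M : qbinom N.+1 M.+1 * (1 - qq ^+ M.+1) = qbinom N M * (1 - qq ^+ N.+1).
Proof.
case: (leqP M N) => H.
- have H' : (M.+1 <= N.+1)%N by [].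
  rewrite (qbinomE H) (qbinomE H') subSS PS PS.
  have h1 := P_neq0 M; have h2 := P_neq0 (N - M); have h3 := P_neq0 N.
  have h4 := oneBq_neq0 M; have h5 := oneBq_neq0 N.
  exact: (@fl_R3 RF (P N) (P M) (P (N - M)) _ _ h1 h2 h4).
- have H' : (N.+1 < M.+1)%N by [].
  by rewrite (qbinom_gt H) (qbinom_gt H') !mul0r.
Qed.

Lemma qbinom_pascal N M : qbinom N.+1 M.+1 = qbinom N M + qq ^+ M.+1 * qbinom N M.+1.
Proof.
case: (ltngtP M N) => H.
- have H' : (M.+1 <= N.+1)%N by apply: ltnW.
  rewrite (qbinomE H') (qbinomE H) (qbinomE (ltnW H)) subSS.
  have -> : (N - M = (N - M.+1).+1)%N by rewrite subnSK.
  rewrite !PS.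
  have -> : qq ^+ N.+1 = qq ^+ M.+1 * qq ^+ (N - M.+1).+1.
    by rewrite -exprD; congr (_ ^+ _); lia.
  have h1 := P_neq0 M; have h2 := P_neq0 (N - M.+1); have h3 := P_neq0 N.
  have h4 := oneBq_neq0 M; have h5 := oneBq_neq0 (N - M.+1).
  exact: (@fl_pas RF (P N) (P M) (P (N - M.+1)) _ _ h1 h2 h4 h5).
- have H1 : (N < M.+1)%N by apply: ltnW.
  have H2 : (N.+1 < M.+1)%N by [].
  by rewrite (qbinom_gt H) (qbinom_gt H1) (qbinom_gt H2) mulr0 addr0.
- by rewrite H !qbinomNN (qbinom_gt (ltnSn N)) mulr0 addr0.
Qed.

Lemma qbinom_poly N M : exists g : {poly rat}, qbinom N M = tofrac g.
Proof.
elim: N M => [|N IH] [|M].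
- by exists 1; rewrite qbinomN0 tofrac1.
- by exists 0; rewrite qbinom_gt ?tofrac0.
- by exists 1; rewrite qbinomN0 tofrac1.
- have [g1 E1] := IH M; have [g2 E2] := IH M.+1.
  exists (g1 + 'X ^+ M.+1 * g2).
  by rewrite qbinom_pascal E1 E2 tofracD tofracM tofracXn.
Qed.

Lemma qpochS x m : qpoch x m.+1 = qpoch x m * (1 - x * qq ^+ m).
Proof. by rewrite /qpoch big_ord_recr. Qed.
Lemma qpoch0 x : qpoch x 0 = 1.
Proof. by rewrite /qpoch big_ord0. Qed.

Definition T (p n d : nat) : RF := \sum_(0 <= k < n)
  qq ^+ k * qbinom (2 * k) (k + d) * qpoch (- qq ^+ k.+1) (n - 1 - k) ^+ p.

Lemma T0 p d : T p 0 d = 0.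
Proof. by rewrite /T big_geq. Qed.

Lemma TS p n d : T p n.+1 d = (1 + qq ^+ n) ^+ p * T p n d + qq ^+ n * qbinom (2 * n) (n + d).
Proof.
rewrite /T big_nat_recr; last exact: leq0n.
rewrite /= subSS subn0 subnn qpoch0 expr1n mulr1; congr (_ + _).
rewrite mulr_sumr; apply: eq_big_nat => k /andP [_ Hk].
have -> : (n - k = (n - 1 - k).+1)%N by lia.
rewrite qpochS exprMn.
have -> : 1 - - qq ^+ k.+1 * qq ^+ (n - 1 - k) = 1 + qq ^+ n.
  by rewrite mulNr opprK -exprD; congr (1 + qq ^+ _); lia.
ring.
Qed.

Lemma qE (a d k i j l : nat) : k = (i + a * j + d * l)%N ->
  qq ^+ k = qq ^+ i * (qq ^+ a) ^+ j * (qq ^+ d) ^+ l.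
Proof. by move=> ->; rewrite !exprD -!exprM. Qed.



Lemma qEF (F : fieldType) (q : F) (a d k i j l : nat) : k = (i + a * j + d * l)%N ->
  q ^+ k = q ^+ i * (q ^+ a) ^+ j * (q ^+ d) ^+ l.
Proof. by move=> ->; rewrite !exprD -!exprM. Qed.

Lemma absI1 (F : fieldType) (q : F) (a d : nat) (b0 b1 b2 b3 b4 : F) :
  1 - q ^+ (d + 1 + a + d).+1 != 0 -> 1 - q ^+ (d + 1 + a + d).+2 != 0 ->
  b1 * (1 - q ^+ (d + 1 + a + d).+1) = b0 * (1 - q ^+ (2 * (d + 1 + a) - (d + 1 + a + d))) ->
  b2 * (1 - q ^+ (d + 1 + a + d).+2) = b1 * (1 - q ^+ (2 * (d + 1 + a) - (d + 1 + a + d).+1)) ->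
  b3 * (1 - q ^+ (d + 1 + a + d).+1) = b0 * (1 - q ^+ (2 * (d + 1 + a)).+1) ->
  b4 * (1 - q ^+ (d + 1 + a + d).+2) = b3 * (1 - q ^+ (2 * (d + 1 + a)).+2) ->
  (1 + q ^+ (d + 1 + a).+1) *
  (q ^+ d * (1 + q ^+ d.+1) * b1 + q ^+ (d + 1 + a) * (b0 + q ^+ (3 * d + 3) * b2)) =
  q ^+ d * (1 + q ^+ d.+1) * b4.
Proof.
move=> nz1 nz2 E1 E2 E3 E4.
have B1 := canRL (mulfK nz1) E1; have B2 := canRL (mulfK nz2) E2.
have B3 := canRL (mulfK nz1) E3; have B4 := canRL (mulfK nz2) E4.
rewrite B4 B3 B2 B1.
have r1 := @qEF _ q a d ((d + 1 + a + d).+1) 2 1 2 ltac:(lia).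
have r2 := @qEF _ q a d ((d + 1 + a + d).+2) 3 1 2 ltac:(lia).
have r3 := @qEF _ q a d (2 * (d + 1 + a) - (d + 1 + a + d)) 1 1 0 ltac:(lia).
have r4 := @qEF _ q a d (2 * (d + 1 + a) - (d + 1 + a + d).+1) 0 1 0 ltac:(lia).
have r5 := @qEF _ q a d ((2 * (d + 1 + a)).+1) 3 2 2 ltac:(lia).
have r6 := @qEF _ q a d ((2 * (d + 1 + a)).+2) 4 2 2 ltac:(lia).
have r7 := @qEF _ q a d ((d + 1 + a).+1) 2 1 1 ltac:(lia).
have r8 := @qEF _ q a d (d.+1) 1 0 1 ltac:(lia).
have r9 := @qEF _ q a d (d + 1 + a) 1 1 1 ltac:(lia).
have r10 := @qEF _ q a d (3 * d + 3) 3 0 3 ltac:(lia).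
rewrite r1 r2 in nz1 nz2 *.
rewrite r3 r4 r5 r6 r7 r8 r9 r10.
move: nz1 nz2; set u := q ^+ a; set v := q ^+ d => nz1 nz2.
by field; rewrite nz1 nz2.
Qed.

Lemma I1 n d : (1 + qq ^+ n) * (T 1 n d + qq ^+ (3 * d + 3) * T 1 n (d + 2))
  = qq ^+ d * (1 + qq ^+ d.+1) * qbinom (2 * n) (n + d + 1).
Proof.
elim: n => [|n IH].
  have h : (2 * 0 < 0 + d + 1)%N by lia.
  by rewrite !T0 mulr0 addr0 mulr0 (qbinom_gt h) mulr0.
rewrite !TS !expr1.
have -> : (1 + qq ^+ n.+1) * ((1 + qq ^+ n) * T 1 n d + qq ^+ n * qbinom (2 * n) (n + d) +
     qq ^+ (3 * d + 3) * ((1 + qq ^+ n) * T 1 n (d + 2) + qq ^+ n * qbinom (2 * n) (n + (d + 2))))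
  = (1 + qq ^+ n.+1) * ((1 + qq ^+ n) * (T 1 n d + qq ^+ (3 * d + 3) * T 1 n (d + 2))
     + qq ^+ n * (qbinom (2 * n) (n + d) + qq ^+ (3 * d + 3) * qbinom (2 * n) (n + (d + 2)))) by ring.
rewrite IH.
case: (ltngtP n d) => Hnd.
- have h0 : (2 * n < n + d)%N by lia.
  have h1 : (2 * n < n + d + 1)%N by lia.
  have h2 : (2 * n < n + (d + 2))%N by lia.
  have h4 : (2 * n.+1 < n.+1 + d + 1)%N by lia.
  rewrite (qbinom_gt h0) (qbinom_gt h1) (qbinom_gt h2) (qbinom_gt h4).
  by rewrite !(mulr0, addr0).
- have [a Ha] : exists a, n = (d + 1 + a)%N by exists (n - d - 1)%N; lia.
  subst n.
  have E1 := qbinom_R1 (2 * (d + 1 + a)) (d + 1 + a + d).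
  have E2 := qbinom_R1 (2 * (d + 1 + a)) (d + 1 + a + d).+1.
  have E3 := qbinom_R3 (2 * (d + 1 + a)) (d + 1 + a + d).
  have E4 := qbinom_R3 (2 * (d + 1 + a)).+1 (d + 1 + a + d).+1.
  have -> : (2 * (d + 1 + a).+1 = (2 * (d + 1 + a)).+2)%N by lia.
  have -> : ((d + 1 + a).+1 + d + 1 = (d + 1 + a + d).+2)%N by lia.
  have -> : (d + 1 + a + (d + 2) = (d + 1 + a + d).+2)%N by lia.
  have -> : (d + 1 + a + d + 1 = (d + 1 + a + d).+1)%N by lia.
  have K := (@absI1 RF qq a d _ _ _ _ _ (oneBq_neq0 _) (oneBq_neq0 _) E1 E2 E3 E4).
  exact K.
- rewrite Hnd.
  have e0 : (d + d = 2 * d)%N by lia.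
  have h1 : (2 * d < d + d + 1)%N by lia.
  have h2 : (2 * d < d + (d + 2))%N by lia.
  have e4 : (d.+1 + d + 1 = 2 * d.+1)%N by lia.
  rewrite (qbinom_gt h1) (qbinom_gt h2) e0 qbinomNN e4 qbinomNN.
  by rewrite !mulr0 add0r addr0 mulr1 mulr1 mulrC.
Qed.

Lemma absI2 (F : fieldType) (q : F) (a d : nat) (b0 b1 b2 b3 b4 : F) :
  1 - q ^+ (d + 1 + a + d).+1 != 0 -> 1 - q ^+ (d + 1 + a + d).+2 != 0 ->
  b1 * (1 - q ^+ (d + 1 + a + d).+1) = b0 * (1 - q ^+ (2 * (d + 1 + a) - (d + 1 + a + d))) ->
  b2 * (1 - q ^+ (d + 1 + a + d).+2) = b1 * (1 - q ^+ (2 * (d + 1 + a) - (d + 1 + a + d).+1)) ->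
  b3 * (1 - q ^+ (d + 1 + a + d).+1) = b0 * (1 - q ^+ (2 * (d + 1 + a)).+1) ->
  b4 * (1 - q ^+ (d + 1 + a + d).+2) = b3 * (1 - q ^+ (2 * (d + 1 + a)).+2) ->
  (1 + q ^+ (d + 1 + a).+1) *
  ((1 + q ^+ (d + 1 + a)) *
   (q ^+ (d.+1 * d.+1) * (1 + q ^+ d.+1) * b1) +
   q ^+ (d + 1 + a) *
   (q ^+ d.+1 * (q ^+ (d * d) * b0) -
    (q ^+ d.+1 + 1) * (q ^+ (d.+1 * d.+1) * b1) +
    q ^+ (d.+2 * d.+2) * b2)) =
  q ^+ (d.+1 * d.+1) * (1 + q ^+ d.+1) * b4.
Proof.
move=> nz1 nz2 E1 E2 E3 E4.
have B1 := canRL (mulfK nz1) E1; have B2 := canRL (mulfK nz2) E2.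
have B3 := canRL (mulfK nz1) E3; have B4 := canRL (mulfK nz2) E4.
rewrite B4 B3 B2 B1.
have s1 : q ^+ (d.+1 * d.+1) = q ^+ (d * d) * q ^+ (2 * d + 1).
  by rewrite -exprD; congr (_ ^+ _); nia.
have s2 : q ^+ (d.+2 * d.+2) = q ^+ (d * d) * q ^+ (4 * d + 4).
  by rewrite -exprD; congr (_ ^+ _); nia.
rewrite s1 s2.
have r1 := @qEF _ q a d ((d + 1 + a + d).+1) 2 1 2 ltac:(lia).
have r2 := @qEF _ q a d ((d + 1 + a + d).+2) 3 1 2 ltac:(lia).
have r3 := @qEF _ q a d (2 * (d + 1 + a) - (d + 1 + a + d)) 1 1 0 ltac:(lia).
have r4 := @qEF _ q a d (2 * (d + 1 + a) - (d + 1 + a + d).+1) 0 1 0 ltac:(lia).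
have r5 := @qEF _ q a d ((2 * (d + 1 + a)).+1) 3 2 2 ltac:(lia).
have r6 := @qEF _ q a d ((2 * (d + 1 + a)).+2) 4 2 2 ltac:(lia).
have r7 := @qEF _ q a d ((d + 1 + a).+1) 2 1 1 ltac:(lia).
have r8 := @qEF _ q a d (d.+1) 1 0 1 ltac:(lia).
have r9 := @qEF _ q a d (d + 1 + a) 1 1 1 ltac:(lia).
have r10 := @qEF _ q a d (2 * d + 1) 1 0 2 ltac:(lia).
have r11 := @qEF _ q a d (4 * d + 4) 4 0 4 ltac:(lia).
rewrite r1 r2 in nz1 nz2 *.
rewrite r3 r4 r5 r6 r7 r8 r9 r10 r11.
move: nz1 nz2; set u := q ^+ a; set v := q ^+ d; set w := q ^+ (d * d) => nz1 nz2.
by field; rewrite nz1 nz2.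
Qed.

Definition G (n d : nat) : RF :=
  qq ^+ d.+1 * (qq ^+ (d * d) * T 2 n d) - (qq ^+ d.+1 + 1) * (qq ^+ (d.+1 * d.+1) * T 2 n d.+1)
  + qq ^+ (d.+2 * d.+2) * T 2 n d.+2.

Lemma I2 n d : (1 + qq ^+ n) * G n d
  = qq ^+ (d.+1 * d.+1) * (1 + qq ^+ d.+1) * qbinom (2 * n) (n + d + 1).
Proof.
elim: n => [|n IH].
  have h : (2 * 0 < 0 + d + 1)%N by lia.
  by rewrite /G !T0 (qbinom_gt h) !(mulr0, subrr, addr0).
have -> : (1 + qq ^+ n.+1) * G n.+1 d = (1 + qq ^+ n.+1) * ((1 + qq ^+ n) * ((1 + qq ^+ n) * G n d) +
   qq ^+ n * (qq ^+ d.+1 * (qq ^+ (d * d) * qbinom (2 * n) (n + d))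
     - (qq ^+ d.+1 + 1) * (qq ^+ (d.+1 * d.+1) * qbinom (2 * n) (n + d.+1))
     + qq ^+ (d.+2 * d.+2) * qbinom (2 * n) (n + d.+2))).
  rewrite /G !TS; ring.
rewrite IH.
case: (ltngtP n d) => Hnd.
- have h0 : (2 * n < n + d)%N by lia.
  have h1 : (2 * n < n + d + 1)%N by lia.
  have h1' : (2 * n < n + d.+1)%N by lia.
  have h2 : (2 * n < n + d.+2)%N by lia.
  have h4 : (2 * n.+1 < n.+1 + d + 1)%N by lia.
  rewrite (qbinom_gt h0) (qbinom_gt h1) (qbinom_gt h1') (qbinom_gt h2) (qbinom_gt h4).
  by rewrite !(mulr0, addr0, subrr).
- have [a Ha] : exists a, n = (d + 1 + a)%N by exists (n - d - 1)%N; lia.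
  subst n.
  have E1 := qbinom_R1 (2 * (d + 1 + a)) (d + 1 + a + d).
  have E2 := qbinom_R1 (2 * (d + 1 + a)) (d + 1 + a + d).+1.
  have E3 := qbinom_R3 (2 * (d + 1 + a)) (d + 1 + a + d).
  have E4 := qbinom_R3 (2 * (d + 1 + a)).+1 (d + 1 + a + d).+1.
  have -> : (2 * (d + 1 + a).+1 = (2 * (d + 1 + a)).+2)%N by lia.
  have -> : ((d + 1 + a).+1 + d + 1 = (d + 1 + a + d).+2)%N by lia.
  have -> : (d + 1 + a + d.+2 = (d + 1 + a + d).+2)%N by lia.
  have -> : (d + 1 + a + d.+1 = (d + 1 + a + d).+1)%N by lia.
  have -> : (d + 1 + a + d + 1 = (d + 1 + a + d).+1)%N by lia.
  have K := (@absI2 RF qq a d _ _ _ _ _ (oneBq_neq0 _) (oneBq_neq0 _) E1 E2 E3 E4).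
  exact K.
- rewrite Hnd.
  have e0 : (d + d = 2 * d)%N by lia.
  have h1 : (2 * d < d + d + 1)%N by lia.
  have h1' : (2 * d < d + d.+1)%N by lia.
  have h2 : (2 * d < d + d.+2)%N by lia.
  have e4 : (d.+1 + d + 1 = 2 * d.+1)%N by lia.
  rewrite (qbinom_gt h1) (qbinom_gt h1') (qbinom_gt h2) e0 qbinomNN e4 qbinomNN.
  rewrite !(mulr0, addr0, subr0, mulr1, add0r) mulrA -!exprD mulrC.
  rewrite [_ * qq ^+ d]mulrC mulrA -exprD; congr (_ ^+ _ * _); nia.
Qed.


Lemma PhiQ_C n : map_poly (ratr : rat -> algC) (PhiQ n) = map_poly (intr : int -> algC) 'Phi_n.
Proof.
rewrite /PhiQ -map_poly_comp; apply: eq_map_poly => z /=; exact: rmorph_int.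
Qed.

Lemma copPhi n (p : {poly rat}) : (0 < n)%N ->
  (forall x : algC, n.-primitive_root x -> (map_poly ratr p).[x] != 0) ->
  coprimep p (PhiQ n).
Proof.
move=> n0 H.
rewrite -(coprimep_map (ratr : {rmorphism rat -> algC})).
have [z pz] := C_prim_root_exists n0.
rewrite PhiQ_C (Cintr_Cyclotomic pz) coprimep_def.
apply/negPn/negP => /closed_rootP [x]; rewrite root_gcd => /andP [r1 r2].
move: r2; rewrite (root_cyclotomic pz) => /H.
by rewrite -/(root _ x) r1.
Qed.

Lemma PhiQ_dvd n : (0 < n)%N -> exists c : {poly rat}, 'X^n - 1 = c * PhiQ n.
Proof.
move=> n0; have := prod_Cyclotomic n0.
have nin : n \in divisors n by rewrite -dvdn_divisors.
rewrite (big_rem _ nin) /= => E.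
exists (map_poly (intr : int -> rat) (\prod_(j <- rem n (divisors n)) 'Phi_j)).
by rewrite mulrC /PhiQ -rmorphM /= E rmorphB /= map_polyXn rmorph1.
Qed.

Lemma PhiQ_neq0 n : PhiQ n != 0.
Proof. by apply: monic_neq0; apply: monic_map; exact: Cyclotomic_monic. Qed.

Lemma hornerQC (p : {poly rat}) (x : algC) : True. Proof. by []. Qed.

Lemma cop1Xn n : (0 < n)%N -> coprimep (1 + 'X^n) (PhiQ n).
Proof.
move=> n0; apply: copPhi => // x px.
rewrite rmorphD rmorph1 /= map_polyXn hornerD hornerC hornerXn (prim_expr_order px).
by rewrite -[1 + 1]/(2%:R) pnatr_eq0.
Qed.

Lemma copXk n k : (0 < n)%N -> coprimep ('X^k) (PhiQ n).
Proof.
move=> n0; apply: copPhi => // x px.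
rewrite map_polyXn hornerXn expf_neq0 //; apply/eqP => x0.
by move: (prim_expr_order px); rewrite x0 expr0n eqn0Ngt n0 /= => /eqP; rewrite eq_sym oner_eq0.
Qed.

Lemma cop1Xm n m : (n < m < 2 * n)%N -> coprimep (1 - 'X^m) (PhiQ n).
Proof.
move=> /andP [h1 h2]; have n0 : (0 < n)%N by lia.
apply: copPhi => // x px.
rewrite rmorphB rmorph1 /= map_polyXn hornerD hornerN hornerC hornerXn subr_eq0 eq_sym.
have -> : (m = (m - n) + n)%N by lia.
rewrite exprD (prim_expr_order px) mulr1 -(prim_order_dvd px).
apply/negP => /dvdn_leq; lia.
Qed.

Lemma fl_add (F : fieldType) (x1 y1 x2 y2 p : F) : y1 != 0 -> y2 != 0 ->
  x1 / y1 * p + x2 / y2 * p = (x1 * y2 + x2 * y1) / (y1 * y2) * p.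
Proof. by move=> *; field; apply/andP; split. Qed.
Lemma fl_mul (F : fieldType) (c e x y p : F) : e != 0 -> y != 0 ->
  c / e * (x / y * p) = (c * x) / (e * y) * p.
Proof. by move=> *; field; apply/andP; split. Qed.
Lemma fl_div (F : fieldType) (c x y p A : F) : c != 0 -> y != 0 ->
  c * A = x / y * p -> A = x / (y * c) * p.
Proof. move=> hc hy E; apply: (mulfI hc); rewrite E; field; by apply/andP; split. Qed.

Definition inI n (A : RF) : Prop := exists a b : {poly rat},
  [/\ b != 0, coprimep b (PhiQ n) & A = tofrac a / tofrac b * tofrac (PhiQ n)].

Lemma inI0 n : inI n 0.
Proof.
exists 0, 1; split; [exact: oner_neq0 | exact: coprime1p |].
by rewrite tofrac0 !mul0r.
Qed.

Lemma inID n A B : inI n A -> inI n B -> inI n (A + B).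
Proof.
move=> [a1 [b1 [h1 c1 ->]]] [a2 [b2 [h2 c2 ->]]].
exists (a1 * b2 + a2 * b1), (b1 * b2); split.
- exact: mulf_neq0.
- by rewrite coprimepMl c1 c2.
- rewrite (@fl_add RF (tofrac a1) (tofrac b1) (tofrac a2) (tofrac b2) (tofrac (PhiQ n))).
  + by rewrite !tofracD !tofracM.
  + by rewrite tofrac_eq0.
  + by rewrite tofrac_eq0.
Qed.

Lemma inIM n c e A : e != 0 -> coprimep e (PhiQ n) -> inI n A -> inI n (tofrac c / tofrac e * A).
Proof.
move=> he ce [a [b [h1 c1 ->]]].
exists (c * a), (e * b); split.
- exact: mulf_neq0.
- by rewrite coprimepMl ce c1.
- rewrite (@fl_mul RF (tofrac c) (tofrac e) (tofrac a) (tofrac b) (tofrac (PhiQ n))).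
  + by rewrite !tofracM.
  + by rewrite tofrac_eq0.
  + by rewrite tofrac_eq0.
Qed.

Lemma inIMp n c A : inI n A -> inI n (tofrac c * A).
Proof.
move=> h; have := @inIM n c 1 A (oner_neq0 _) (coprime1p _) h.
by rewrite tofrac1 divr1.
Qed.

Lemma inIN n A : inI n A -> inI n (- A).
Proof. by move=> h; rewrite -mulN1r -tofrac1 -tofracN; apply: inIMp. Qed.

Lemma inIB n A B : inI n A -> inI n B -> inI n (A - B).
Proof. by move=> hA hB; apply: inID => //; apply: inIN. Qed.

Lemma inI_div n c A : c != 0 -> coprimep c (PhiQ n) -> inI n (tofrac c * A) -> inI n A.
Proof.
move=> hc cc [a [b [h1 c1 E]]].
exists a, (b * c); split.
- exact: mulf_neq0.
- by rewrite coprimepMl c1 cc.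
- rewrite tofracM; apply: (@fl_div RF (tofrac c) (tofrac a) (tofrac b) (tofrac (PhiQ n)) A) => //.
  + by rewrite tofrac_eq0.
  + by rewrite tofrac_eq0.
Qed.

Lemma inIq n : (0 < n)%N -> inI n (qq ^+ n - 1).
Proof.
move=> n0; have [c E] := @PhiQ_dvd n n0.
exists c, 1; split; [exact: oner_neq0 | exact: coprime1p |].
by rewrite tofrac1 divr1 -tofracM -E tofracB tofracXn tofrac1.
Qed.


Lemma qbinom_2n n m : (n < m < 2 * n)%N -> inI n (qbinom (2 * n) m).
Proof.
move=> hm; have n0 : (0 < n)%N by lia.
have E := qbinom_R3 (2 * n).-1 m.-1.
have e1 : ((2 * n).-1.+1 = 2 * n)%N by lia.
have e2 : (m.-1.+1 = m)%N by lia.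
rewrite e1 e2 in E.
have [g Eg] := qbinom_poly (2 * n).-1 m.-1.
apply: (@inI_div n (1 - 'X^m)).
- apply/eqP => /(congr1 (horner^~ 0)).
  rewrite hornerD hornerN hornerXn hornerC expr0n horner0.
  have -> : (m == 0%N) = false by lia.
  by rewrite mulr0n subr0 => /eqP; rewrite oner_eq0.
- exact: cop1Xm.
- have -> : tofrac (1 - 'X^m) * qbinom (2 * n) m = tofrac (g * - (1 + 'X^n)) * (qq ^+ n - 1).
    rewrite mulrC tofracB tofrac1 tofracXn -/qq E Eg tofracM tofracN tofracD tofrac1 tofracXn -/qq.
    have -> : (2 * n = n + n)%N by lia.
    rewrite exprD; ring.
  by apply: inIMp; apply: inIq.
Qed.

Lemma onepX_neq0 n : (0 < n)%N -> (1 + 'X^n : {poly rat}) != 0.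
Proof.
move=> n0; apply/eqP => /(congr1 (horner^~ 0)).
rewrite hornerD hornerXn hornerC expr0n horner0.
have -> : (n == 0%N) = false by lia.
by rewrite mulr0n addr0 => /eqP; rewrite oner_eq0.
Qed.

Lemma rec1 n d : (d + 2 <= n)%N -> inI n (T 1 n d + qq ^+ (3 * d + 3) * T 1 n (d + 2)).
Proof.
move=> hd; have n0 : (0 < n)%N by lia.
apply: (@inI_div n (1 + 'X^n)); [exact: onepX_neq0 | exact: cop1Xn |].
rewrite tofracD tofrac1 tofracXn -/qq I1.
have -> : qq ^+ d * (1 + qq ^+ d.+1) = tofrac ('X^d * (1 + 'X^(d.+1))).
  by rewrite tofracM tofracD tofrac1 !tofracXn.
apply: inIMp; apply: qbinom_2n; lia.
Qed.

Lemma rec2 n d : (d + 2 <= n)%N -> inI n (G n d).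
Proof.
move=> hd; have n0 : (0 < n)%N by lia.
apply: (@inI_div n (1 + 'X^n)); [exact: onepX_neq0 | exact: cop1Xn |].
rewrite tofracD tofrac1 tofracXn -/qq I2.
have -> : qq ^+ (d.+1 * d.+1) * (1 + qq ^+ d.+1) = tofrac ('X^(d.+1 * d.+1) * (1 + 'X^(d.+1))).
  by rewrite tofracM tofracD tofrac1 !tofracXn.
apply: inIMp; apply: qbinom_2n; lia.
Qed.

Lemma Tgt p n d : (n <= d)%N -> T p n d = 0.
Proof.
elim: n => [|n IH] h; first exact: T0.
have h' : (2 * n < n + d)%N by lia.
rewrite TS IH; last lia.
by rewrite (qbinom_gt h') !mulr0 addr0.
Qed.

Lemma Tlast p n : T p n.+1 n = qq ^+ n.
Proof.
have e : (n + n = 2 * n)%N by lia.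
rewrite TS Tgt; last exact: leqnn.
by rewrite mulr0 add0r e qbinomNN mulr1.
Qed.

Definition Rs n s : RF := (-1) ^+ s * qq ^+ (3 * s * (n - 1 - s)) / qq.

Lemma fl_e0 (F : fieldType) (q : F) m : q != 0 ->
  q ^+ m - (-1) ^+ 0 * q ^+ 0 / q = 1 / q * (q ^+ m.+1 - 1).
Proof. by move=> h; rewrite !expr0 exprS; field. Qed.

Lemma part1_even n s : (2 * s + 1 <= n)%N -> inI n (T 1 n (n - 1 - 2 * s) - Rs n s).
Proof.
elim: s => [|s IH] hs.
- have n0 : (0 < n)%N by lia.
  have [m Em] : exists m, n = m.+1 by exists n.-1; lia.
  rewrite /Rs !muln0 !mul0n subn0 Em subn1 succnK Tlast.
  rewrite (@fl_e0 RF qq m qq_neq0) -tofrac1 qqE.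
  apply: inIM; [by rewrite polyX_eq0 | by rewrite -[X in coprimep X]expr1; apply: copXk; lia |].
  by rewrite -qqE -Em; apply: inIq.
- set d := (n - 1 - 2 * s.+1)%N.
  have hd : (d + 2 = n - 1 - 2 * s)%N by lia.
  have hR : Rs n s.+1 = - (qq ^+ (3 * d + 3) * Rs n s).
    rewrite /Rs.
    have -> : (3 * s.+1 * (n - 1 - s.+1) = (3 * d + 3) + 3 * s * (n - 1 - s))%N by rewrite /d; nia.
    by rewrite exprS exprD; ring.
  have key : T 1 n d - Rs n s.+1 = (T 1 n d + qq ^+ (3 * d + 3) * T 1 n (d + 2))
      - tofrac ('X^(3 * d + 3)) * (T 1 n (n - 1 - 2 * s) - Rs n s).
    by rewrite hR hd tofracXn -qqE; ring.
  rewrite key; apply: inIB; first by apply: rec1; lia.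
  by apply: inIMp; apply: IH; lia.
Qed.

Lemma part1_odd n s : (2 * s + 2 <= n)%N -> inI n (T 1 n (n - 2 - 2 * s)).
Proof.
elim: s => [|s IH] hs.
- have h := @rec1 n (n - 2) ltac:(lia).
  have e : (n - 2 + 2 = n)%N by lia.
  rewrite e (@Tgt 1 n n (leqnn n)) mulr0 addr0 in h.
  by rewrite muln0 subn0.
- set d := (n - 2 - 2 * s.+1)%N.
  have hd : (d + 2 = n - 2 - 2 * s)%N by lia.
  have key : T 1 n d = (T 1 n d + qq ^+ (3 * d + 3) * T 1 n (d + 2))
      - tofrac ('X^(3 * d + 3)) * T 1 n (n - 2 - 2 * s).
    by rewrite hd tofracXn -qqE; ring.
  rewrite key; apply: inIB; first by apply: rec1; lia.
  by apply: inIMp; apply: IH; lia.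
Qed.

Definition A n d : RF := \sum_(d.+1 <= k < n.+1) qq ^+ ('C(n, 2) + 'C(k, 2)).
Definition E n d : RF := qq ^+ (d * d) * T 2 n d - A n d.

Lemma A_rec n d : (d + 2 <= n)%N ->
  qq ^+ d.+1 * A n d - (qq ^+ d.+1 + 1) * A n d.+1 + A n d.+2 = 0.
Proof.
move=> h; rewrite /A (@big_ltn _ _ _ d.+1 n.+1); last lia.
rewrite (@big_ltn _ _ _ d.+2 n.+1); last lia.
set X := \sum_(d.+3 <= k < n.+1) _.
have -> : qq ^+ ('C(n, 2) + 'C(d.+2, 2)) = qq ^+ d.+1 * qq ^+ ('C(n, 2) + 'C(d.+1, 2)).
  by rewrite -exprD binS bin1; congr (_ ^+ _); lia.
ring.
Qed.

Lemma G_E n d : (d + 2 <= n)%N ->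
  G n d = qq ^+ d.+1 * E n d - (qq ^+ d.+1 + 1) * E n d.+1 + E n d.+2.
Proof.
move=> h; have HA := @A_rec n d h.
apply/eqP; rewrite -subr_eq0; apply/eqP; rewrite -[RHS]HA /G /E; ring.
Qed.

Lemma bin2_double m : ('C(m.+1, 2) + 'C(m.+1, 2) = m * m + m)%N.
Proof.
elim: m => [|m IH] //.
rewrite binS bin1; lia.
Qed.

Lemma E_top n : E n n = 0.
Proof. by rewrite /E Tgt // mulr0 /A big_geq // subrr. Qed.

Lemma E_top1 m : E m.+1 m = 0.
Proof.
rewrite /E Tlast /A big_nat1 -exprD bin2_double.
by rewrite subrr.
Qed.

Lemma part2E n t : (t <= n)%N -> inI n (E n (n - t)).
Proof.
elim/ltn_ind: t => t IH ht.
case: t IH ht => [|[|t]] IH ht.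
- by rewrite subn0 E_top; apply: inI0.
- have [m Em] : exists m, n = m.+1 by exists n.-1; lia.
  by rewrite Em subn1 succnK E_top1; apply: inI0.
- set d := (n - t.+2)%N.
  have e1 : (d.+1 = n - t.+1)%N by lia.
  have e2 : (d.+2 = n - t)%N by lia.
  apply: (@inI_div n ('X^(d.+1))).
  + by rewrite expf_neq0 // polyX_eq0.
  + by apply: copXk; lia.
  have -> : tofrac ('X^(d.+1)) * E n d = G n d + (qq ^+ d.+1 + 1) * E n (n - t.+1) - E n (n - t).
    by rewrite G_E; [rewrite -e1 -e2 tofracXn -qqE; ring | lia].
  apply: inIB; first apply: inID.
  + by apply: rec2; lia.
  + have -> : qq ^+ d.+1 + 1 = tofrac ('X^(d.+1) + 1) by rewrite tofracD tofracXn tofrac1.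
    by apply: inIMp; apply: IH; lia.
  + by apply: IH; lia.
Qed.

Lemma qz (a b : nat) : qq ^ (Posz a - Posz b) = qq ^+ a / qq ^+ b.
Proof. by rewrite (expfzDr _ _ qq_neq0) -invr_expz. Qed.

Lemma fl_w (F : fieldType) (w t a : F) : w != 0 -> t - a / w = 1 / w * (w * t - a).
Proof. by move=> h; field. Qed.

Lemma signE2 i : (-1) ^+ (2 * i) = 1 :> RF.
Proof. by rewrite exprM sqrrN expr1n expr1n. Qed.

Lemma Kexp n d s : (d + 2 * s = n - 1)%N ->
  (3 * ((n - 1) ^ 2 - d ^ 2) %/ 4 = 3 * s * (n - 1 - s))%N.
Proof.
move=> h; rewrite -h.
have -> : ((d + 2 * s) ^ 2 - d ^ 2 = 4 * (s * (d + s)))%N.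
  rewrite !expnS !expn0 !muln1; nia.
rewrite mulnCA mulKn //; nia.
Qed.

Theorem corollary1p2 (n d : nat) :
  (1 <= n)%N -> (d <= n - 1)%N ->
  let S1 := \sum_(0 <= k < n)
              qq ^+ k * qbinom (2 * k) (k + d) * qpoch (- qq ^+ k.+1) (n - 1 - k) in
  let S2 := \sum_(0 <= k < n)
              qq ^+ k * qbinom (2 * k) (k + d) * qpoch (- qq ^+ k.+1) (n - 1 - k) ^+ 2 in
  let e : int := (Posz (3 * ((n - 1) ^ 2 - d ^ 2) %/ 4)%N) - 1 in
  [/\ (n = d %[mod 2])%N -> cong_Phi n S1 0,
      (n = d + 1 %[mod 4])%N -> cong_Phi n S1 (qq ^ e),
      (n + 1 = d %[mod 4])%N -> cong_Phi n S1 (- qq ^ e)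
    & cong_Phi n S2
        (\sum_(d.+1 <= k < n.+1)
           qq ^ (Posz ('C(n, 2) + 'C(k, 2))%N - Posz (d ^ 2)%N))].
Proof.
move=> n1 hd S1 S2 e.
have eS1 : S1 = T 1 n d by rewrite /S1 /T; apply: eq_bigr => k _; rewrite expr1.
have eS2 : S2 = T 2 n d by [].
split.
- move=> hm.
  have [s [hs1 hs2]] : exists s, d = (n - 2 - 2 * s)%N /\ (2 * s + 2 <= n)%N.
    exists ((n - 2 - d) %/ 2)%N; split; lia.
  rewrite /cong_Phi eS1 subr0 hs1; exact: part1_odd.
- move=> hm.
  have [i [hs1 hs2]] : exists i, (d + 2 * (2 * i) = n - 1)%N /\ (2 * (2 * i) + 1 <= n)%N.
    exists ((n - 1 - d) %/ 4)%N; split; lia.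
  have hR : Rs n (2 * i) = qq ^ e.
    by rewrite /Rs /e (@Kexp _ _ _ hs1) qz expr1 signE2 mul1r.
  have hd' : d = (n - 1 - 2 * (2 * i))%N by lia.
  rewrite /cong_Phi eS1 -hR {1}hd'; exact: part1_even.
- move=> hm.
  have [i [hs1 hs2]] : exists i, (d + 2 * (2 * i).+1 = n - 1)%N /\ (2 * (2 * i).+1 + 1 <= n)%N.
    exists ((n - 3 - d) %/ 4)%N; split; lia.
  have hR : Rs n (2 * i).+1 = - qq ^ e.
    by rewrite /Rs /e (@Kexp _ _ _ hs1) qz expr1 exprS signE2 mulr1 mulN1r mulNr.
  have hd' : d = (n - 1 - 2 * (2 * i).+1)%N by lia.
  rewrite /cong_Phi eS1 -hR {1}hd'; exact: part1_even.
- rewrite /cong_Phi.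
  have -> : \sum_(d.+1 <= k < n.+1) qq ^ (Posz ('C(n, 2) + 'C(k, 2))%N - Posz (d ^ 2)%N)
      = A n d / qq ^+ (d * d).
    rewrite /A mulr_suml; apply: eq_bigr => k _.
    by rewrite qz !expnS expn0 muln1.
  rewrite (@fl_w RF (qq ^+ (d * d)) (T 2 n d) (A n d) (expf_neq0 _ qq_neq0)).
  rewrite -tofrac1 qqE -tofracXn.
  apply: inIM; [by rewrite expf_neq0 // polyX_eq0 | by apply: copXk; lia |].
  have h := @part2E n (n - d) (leq_subr d n).
  have e2 : (n - (n - d) = d)%N by lia.
  rewrite e2 in h; rewrite tofracXn -qqE; exact: h.
Qed.
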